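(* For every positive integer $n$, $N'(n,0,n-1)=n-1$.
   Context: $\mathbb{Z}_4$ is the ring of integers modulo $4$; a $\mathbb{Z}_4$-code of length $n$ is a $\mathbb{Z}_4$-submodule of $\mathbb{Z}_4^n$. Two codes are equivalent if one is obtained from the other by permuting coordinates and changing the signs of some coordinates. Every $\mathbb{Z}_4$-code is permutation-equivalent to one with generator matrix $\begin{pmatrix} I_{k_1} & A & B \\ O & 2I_{k_2} & 2D\end{pmatrix}$ with $A,D$ $(0,1)$-matrices and $B$ a $\mathbb{Z}_4$-matrix; the code then has type $4^{k_1}2^{k_2}$. The trivial extension of a code $C$ of length $n-1$ is $\{(c,0)\mid c\in C\}$ (the only code of length $0$ is the zero code). $N'(n,k_1,k_2)$ denotes the number of equivalence classes of $\mathbb{Z}_4$-codes of length $n$ and type $4^{k_1}2^{k_2}$ that are not equivalent to the trivial extension of any $\mathbb{Z}_4$-code of length $n-1$. *)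

(* Defs.v *)
From HB Require Import structures.
From mathcomp Require Import all_boot all_order all_fingroup all_algebra.
Set Implicit Arguments. Unset Strict Implicit. Unset Printing Implicit Defensive.
Import GRing.Theory.
Local Open Scope ring_scope.

Notation word n := 'rV['Z_4]_n.

Definition is_code (n : nat) (C : {set word n}) : bool :=
  [&& (0 : word n) \in C,
      [forall x in C, forall y in C, x + y \in C] &
      [forall a : 'Z_4, forall x in C, a *: x \in C]].

Definition monomial (n : nat) (s : 'S_n) (e : {ffun 'I_n -> bool}) (x : word n)
  : word n := \row_j ((-1) ^+ e j * x 0 (s j)).

Definition perm_word (n : nat) (s : 'S_n) (x : word n) : word n :=
  \row_j x 0 (s j).

Definition perm_code (n : nat) (s : 'S_n) (C : {set word n}) : {set word n} :=
  [set perm_word s x | x in C].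

Definition code_equiv (n : nat) (C D : {set word n}) : bool :=
  [exists s : 'S_n, exists e : {ffun 'I_n -> bool},
     D == [set monomial s e x | x in C]].

(* G : 'M_(k1+k2, n) is of the standard form
   ( I_k1  A      B   )
   ( O     2I_k2  2D  )  with A, D (0,1)-matrices. *)
Definition std_gen (k1 k2 n : nat) (G : 'M['Z_4]_(k1 + k2, n)) : bool :=
  [forall i : 'I_(k1 + k2), forall j : 'I_n,
     if (i < k1)%N then
       (if (j < k1)%N then G i j == (i == j :> nat)%:R
        else if (j < k1 + k2)%N then (G i j == 0) || (G i j == 1)
        else true)
     else
       (if (j < k1)%N then G i j == 0
        else if (j < k1 + k2)%N then G i j == (i == j :> nat)%:R *+ 2
        else (G i j == 0) || (G i j == 2%:R))].

Definition has_type (n k1 k2 : nat) (C : {set word n}) : bool :=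
  (k1 + k2 <= n)%N &&
  [exists s : 'S_n, exists G : 'M['Z_4]_(k1 + k2, n),
     std_gen G && (perm_code s C == [set c *m G | c : 'rV['Z_4]_(k1 + k2)])].

(* Trivial extension (c, 0) of a word of length n.-1 to length n. *)
Definition triv_ext_word (n : nat) (c : word n.-1) : word n :=
  \row_(j < n) match (insub (val j) : option 'I_n.-1) with
               | Some j' => c 0 j'
               | None => 0
               end.

Definition triv_ext (n : nat) (D : {set word n.-1}) : {set word n} :=
  [set triv_ext_word c | c in D].

Definition good_code (n k1 k2 : nat) (C : {set word n}) : bool :=
  [&& is_code C, has_type k1 k2 C &
      ~~ [exists D : {set word n.-1}, is_code D && code_equiv C (@triv_ext n D)]].

Definition Nprime (n k1 k2 : nat) : nat :=
  #|[set [set D : {set word n} | good_code k1 k2 D && code_equiv C D]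
      | C in [set C : {set word n} | good_code k1 k2 C]]|.

(* Main.v *)
Require Import Defs.
From mathcomp Require Import all_boot all_order all_fingroup all_algebra.
Set Implicit Arguments. Unset Strict Implicit. Unset Printing Implicit Defensive.
Import GRing.Theory.
Local Open Scope ring_scope.

Lemma Z4a (a : 'Z_4) : a + a = 0 -> (a == 2%:R)%:R * 2%:R = a.
Proof. case: a => [[|[|[|[|k]]]] Hk] /eqP; rewrite -val_eqE //= => _; exact/val_inj. Qed.
Lemma Z4b (a : 'Z_4) : a + a = 0 -> - a = a.
Proof. case: a => [[|[|[|[|k]]]] Hk] /eqP; rewrite -val_eqE //= => _; exact/val_inj. Qed.
Lemma Z4_22 : (2%:R + 2%:R : 'Z_4) = 0.
Proof. exact/val_inj. Qed.
Lemma Z4_2 : (2%:R : 'Z_4) != 0.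
Proof. by []. Qed.

Lemma signK (b : bool) (a : 'Z_4) : (-1) ^+ b * ((-1) ^+ b * a) = a.
Proof. by case: b; rewrite ?expr0 ?expr1 ?mul1r ?mulN1r ?opprK. Qed.

Lemma sign_dbl (b : bool) (a : 'Z_4) :
  ((-1) ^+ b * a + (-1) ^+ b * a == 0) = (a + a == 0).
Proof. by case: b; rewrite ?expr0 ?expr1 ?mul1r ?mulN1r // -opprD oppr_eq0. Qed.

Lemma sign_fix (b : bool) (a : 'Z_4) : a + a = 0 -> (-1) ^+ b * a = a.
Proof. by move=> h; case: b; rewrite ?expr0 ?expr1 ?mul1r ?mulN1r ?Z4b. Qed.

Section Gen.
Variable n : nat.

Definition K (S : {set 'I_n}) : {set word n} :=
  [set x : word n | [forall j, x 0 j + x 0 j == 0] && (\sum_(j in S) x 0 j == 0)].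

Definition e2 (j : 'I_n) : word n := \row_i (if i == j then 2%:R else 0).

Lemma sum_e2 (S : {set 'I_n}) j :
  \sum_(i in S) (e2 j) 0 i = if j \in S then 2%:R else 0.
Proof.
under eq_bigr do rewrite mxE.
rewrite -big_mkcondr /=.
case: ifP => jS.
  rewrite (bigD1 j) /=; last by rewrite jS eqxx.
  by rewrite big1 ?addr0 // => i /andP[/andP[_ /eqP ->]]; rewrite eqxx.
by rewrite big1 // => i /andP[iS /eqP eij]; subst; rewrite jS in iS.
Qed.

Lemma e2_dbl (j i : 'I_n) : (e2 j) 0 i + (e2 j) 0 i = 0.
Proof. by rewrite mxE; case: ifP; rewrite ?addr0 ?Z4_22. Qed.

Lemma e2K (S : {set 'I_n}) j : (e2 j \in K S) = (j \notin S).
Proof.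
rewrite inE sum_e2; have -> : [forall j0, e2 j 0 j0 + e2 j 0 j0 == 0].
  by apply/forallP => i; rewrite e2_dbl.
by case: (j \in S); rewrite /= ?eqxx // (negbTE Z4_2).
Qed.

Lemma K_inj (S T : {set 'I_n}) : K S = K T -> S = T.
Proof. by move=> h; apply/setP => j; move: (e2K S j); rewrite h e2K; case: (j \in S); case: (j \in T). Qed.

Lemma setK (S : {set 'I_n}) : [set j | e2 j \notin K S] = S.
Proof. by apply/setP => j; rewrite inE e2K negbK. Qed.

Lemma is_code_K (S : {set 'I_n}) : is_code (K S).
Proof.
apply/and3P; split.
- rewrite inE; apply/andP; split; first by apply/forallP => j; rewrite mxE addr0.
  by rewrite big1 // => j _; rewrite mxE.
- apply/forallP => x; apply/implyP; rewrite inE => /andP[/forallP hx sx].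
  apply/forallP => y; apply/implyP; rewrite inE => /andP[/forallP hy sy].
  rewrite inE; apply/andP; split.
    apply/forallP => j; rewrite mxE addrACA.
    by rewrite (eqP (hx j)) (eqP (hy j)) addr0.
  under eq_bigr do rewrite mxE.
  by rewrite big_split /= (eqP sx) (eqP sy) addr0.
- apply/forallP => a; apply/forallP => x; apply/implyP; rewrite inE => /andP[/forallP hx sx].
  rewrite inE; apply/andP; split.
    by apply/forallP => j; rewrite mxE -mulrDr (eqP (hx j)) mulr0.
  under eq_bigr do rewrite mxE.
  by rewrite -mulr_sumr (eqP sx) mulr0.
Qed.

Definition minv (s : 'S_n) (e : {ffun 'I_n -> bool}) (y : word n) : word n :=
  \row_i ((-1) ^+ e (s^-1 i)%g * y 0 (s^-1 i)%g).

Lemma monomialK (s : 'S_n) (e : {ffun 'I_n -> bool}) : cancel (monomial s e) (minv s e).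
Proof. by move=> x; apply/rowP => i; rewrite !mxE permKV signK. Qed.

Lemma minvK (s : 'S_n) (e : {ffun 'I_n -> bool}) : cancel (minv s e) (monomial s e).
Proof. by move=> x; apply/rowP => i; rewrite !mxE permK signK. Qed.

Lemma monomial_inj (s : 'S_n) (e : {ffun 'I_n -> bool}) : injective (monomial s e).
Proof. exact: can_inj (monomialK s e). Qed.

Lemma mono_mem (s : 'S_n) (e : {ffun 'I_n -> bool}) (x : word n) (T : {set 'I_n}) : (monomial s e x \in K T) = (x \in K (s @: T)).
Proof.
rewrite !inE.
have hd : [forall j, monomial s e x 0 j + monomial s e x 0 j == 0] =
          [forall j, x 0 j + x 0 j == 0].
  apply/forallP/forallP => h j.
    by move: (h (s^-1 j)%g); rewrite mxE sign_dbl permKV.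
  by rewrite mxE sign_dbl h.
rewrite hd; case: forallP => //= h.
rewrite big_imset /=; last by move=> a b _ _; apply: perm_inj.
by rewrite (eq_bigr (fun j => x 0 (s j))) // => j _; rewrite mxE sign_fix //; exact/eqP/h.
Qed.

Lemma mono_K (s : 'S_n) (e : {ffun 'I_n -> bool}) (T : {set 'I_n}) : [set monomial s e x | x in K (s @: T)] = K T.
Proof.
apply/setP => y; rewrite -{1}(minvK s e y) mem_imset; last exact: monomial_inj.
by rewrite -(mono_mem s e) minvK.
Qed.

Lemma permsetK (s : 'S_n) (S : {set 'I_n}) : s @: (s^-1 @: S)%g = S.
Proof.
rewrite -imset_comp; under eq_imset do rewrite /= permKV.
exact: imset_id.
Qed.

Lemma mono_K' (s : 'S_n) (e : {ffun 'I_n -> bool}) (S : {set 'I_n}) : [set monomial s e x | x in K S] = K (s^-1 @: S)%g.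
Proof. by rewrite -{1}(permsetK s S) mono_K. Qed.

Lemma perm_word_mono (s : 'S_n) (x : word n) : perm_word s x = monomial s [ffun=> false] x.
Proof. by apply/rowP => j; rewrite !mxE ffunE expr0 mul1r. Qed.

Lemma exists_perm (S T : {set 'I_n}) : #|S| = #|T| -> exists s : 'S_n, s @: S = T.
Proof.
move=> hc.
pose p := enum S ++ enum (~: S); pose q := enum T ++ enum (~: T).
have up : uniq p.
  rewrite cat_uniq !enum_uniq /= andbT; apply/hasPn => x; rewrite !mem_enum inE.
  by move=> ->.
have uq : uniq q.
  rewrite cat_uniq !enum_uniq /= andbT; apply/hasPn => x; rewrite !mem_enum inE.
  by move=> ->.
have memp x : x \in p by rewrite mem_cat !mem_enum inE; case: (x \in S).
have szq : size q = n.
  by rewrite size_cat -!cardE cardsC card_ord.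
have szp : size p = n.
  by rewrite size_cat -!cardE cardsC card_ord.
have sz : size q = size p by rewrite szq szp.
pose f x := nth x q (index x p).
have fi : injective f.
  move=> x y; rewrite /f => h.
  have hx : (index x p < size q)%N by rewrite sz index_mem.
  have hy : (index y p < size q)%N by rewrite sz index_mem.
  have : index x p = index y p.
    apply/eqP; rewrite -(nth_uniq x hx hy uq); rewrite h.
    by rewrite (set_nth_default y x hy).
  by move=> e; rewrite -(nth_index x (memp x)) e (nth_index x (memp y)).
exists (perm fi).
apply/eqP; rewrite eqEcard card_imset ?hc ?leqnn ?andbT; last exact: perm_inj.
apply/subsetP => y /imsetP[x xS ->]; rewrite permE /f.
have hi : (index x p < size (enum T))%N.
  by rewrite /p index_cat mem_enum xS -cardE -hc cardE index_mem mem_enum.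
by rewrite /q nth_cat hi -(mem_enum T) mem_nth.
Qed.

Lemma equiv_K (S T : {set 'I_n}) : code_equiv (K S) (K T) = (#|S| == #|T|).
Proof.
apply/existsP/eqP.
  case=> s /existsP[e /eqP]; rewrite mono_K' => /K_inj ->.
  by rewrite card_imset //; apply: perm_inj.
move=> hc; have [s hs] := exists_perm (esym hc).
exists s; apply/existsP; exists [ffun=> false].
by rewrite -hs mono_K.
Qed.

End Gen.
Section Spec.
Variable m : nat.
Local Notation wd := (widen_ord (leqnSn m)).

Lemma wd_inj : injective wd.
Proof. by move=> a b h; apply/val_inj; exact: (congr1 val h). Qed.

Lemma ordS_case (j : 'I_m.+1) : (exists j', j = wd j') \/ j = ord_max.
Proof.
case: (ltnP j m) => h; first by left; exists (Ordinal h); apply/val_inj.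
by right; apply/val_inj/eqP; rewrite /= eqn_leq h -ltnS ltn_ord.
Qed.

Lemma forall_split (P : pred 'I_m.+1) :
  [forall j, P j] = [forall j : 'I_m, P (wd j)] && P ord_max.
Proof.
apply/forallP/andP => [h|[/forallP h1 h2] j]; first by split => //; apply/forallP => j.
by case: (ordS_case j) => [[j' ->]|->].
Qed.

Lemma K_split (S : {set 'I_m.+1}) (x : word m.+1) : x \in K S =
  [&& [forall j : 'I_m, x 0 (wd j) + x 0 (wd j) == 0],
      (x 0 ord_max + x 0 ord_max == 0) &
      (\sum_(j < m) (if wd j \in S then x 0 (wd j) else 0)
        + (if ord_max \in S then x 0 ord_max else 0) == 0)].
Proof. by rewrite inE forall_split big_mkcond big_ord_recr /= andbA. Qed.

Lemma std_genP (G : 'M['Z_4]_(0 + m, m.+1)) : std_gen G ->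
  (forall i j : 'I_m, G i (wd j) = (i == j)%:R *+ 2) /\
  (forall i : 'I_m, G i ord_max = 0 \/ G i ord_max = 2%:R).
Proof.
move/forallP => h; split => [i j|i].
  move: (forallP (h i) (wd j)); rewrite (_ : (wd j < 0 + m)%N = true); last exact: ltn_ord j.
  by move=> /eqP ->.
move: (forallP (h i) ord_max); rewrite (_ : (ord_max < 0 + m)%N = false); last exact: ltnn m.
by case/orP => /eqP ->; [left|right].
Qed.

Definition SG (G : 'M['Z_4]_(0 + m, m.+1)) : {set 'I_m.+1} :=
  ord_max |: [set wd i | i in [set i : 'I_m | G i ord_max == 2%:R]].

Lemma SG_wd (G : 'M['Z_4]_(0 + m, m.+1)) (j : 'I_m) : (wd j \in SG G) = (G j ord_max == 2%:R).
Proof.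
rewrite !inE mem_imset; last exact: wd_inj.
have -> : (wd j == ord_max) = false by apply/negbTE; rewrite -val_eqE /= neq_ltn ltn_ord.
by rewrite inE.
Qed.

Lemma SG_max (G : 'M['Z_4]_(0 + m, m.+1)) : ord_max \in SG G.
Proof. by rewrite !inE eqxx. Qed.

Lemma span_std (G : 'M['Z_4]_(0 + m, m.+1)) : std_gen G -> [set c *m G | c : 'rV['Z_4]_(0 + m)] = K (SG G).
Proof.
move=> /std_genP [hw hl].
have ew (c : 'rV['Z_4]_(0 + m)) j : (c *m G) 0 (wd j) = c 0 j * 2%:R.
  rewrite mxE (bigD1 j) //= hw eqxx big1 ?addr0 // => i /negbTE hij.
  by rewrite hw (_ : (i == j) = false) ?mul0rn ?mulr0.
have eo (c : 'rV['Z_4]_(0 + m)) : (c *m G) 0 ord_max = \sum_i c 0 i * G i ord_max.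
  by rewrite mxE.
have dd i : G i ord_max + G i ord_max = 0 by case: (hl i) => ->; rewrite ?addr0 ?Z4_22.
apply/setP => x; apply/imsetP/idP.
- case=> c _ ->; rewrite K_split; apply/and3P; split.
  + by apply/forallP => j; rewrite ew -mulrDr Z4_22 mulr0.
  + by rewrite eo -big_split /=; rewrite big1 // => i _; rewrite -mulrDr dd mulr0.
  + rewrite SG_max eo -big_split big1 //= => i _.
    rewrite SG_wd ew; case: (hl i) => ->; rewrite ?mulr0 ?addr0 ?eqxx //.
    by rewrite -mulrDr Z4_22 mulr0.
- rewrite K_split => /and3P[/forallP hd hm hs].
  exists (\row_i (x 0 (wd i) == 2%:R)%:R) => //; apply/rowP => j.
  case: (ordS_case j) => [[j' ->]|->].
    by rewrite ew mxE Z4a //; apply/eqP.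
  move: hs; rewrite SG_max addrC addr_eq0 => /eqP hs.
  rewrite eo -(Z4b (eqP hm)) hs opprK; apply: eq_bigr => i _.
  rewrite mxE SG_wd; case: (hl i) => ->; rewrite ?mulr0 ?eqxx.
    by rewrite eq_sym (negbTE Z4_2).
  by rewrite Z4a //; apply/eqP.
Qed.

Definition GT (T : {set 'I_m.+1}) : 'M['Z_4]_(0 + m, m.+1) :=
  \matrix_(i < 0 + m, j < m.+1)
     if (j < m)%N then (i == j :> nat)%:R *+ 2 else (if wd i \in T then 2%:R else 0).

Lemma std_gen_GT (T : {set 'I_m.+1}) : std_gen (GT T).
Proof.
apply/forallP => i; apply/forallP => j; rewrite mxE (_ : (j < 0 + m)%N = (j < m)%N) //.
have [hj|hj] := boolP (j < m)%N; rewrite ?hj ?(negbTE hj) ?eqxx //.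
by case: ifP => _; rewrite eqxx ?orbT.
Qed.

Lemma SG_GT (T : {set 'I_m.+1}) : ord_max \in T -> SG (GT T) = T.
Proof.
move=> hT; apply/setP => j; case: (ordS_case j) => [[j' ->]|->]; last by rewrite SG_max hT.
rewrite SG_wd mxE ltnn; case: ifP => _; first by rewrite eqxx.
by rewrite eq_sym (negbTE Z4_2).
Qed.

Lemma K_has_type (S : {set 'I_m.+1}) : S != set0 -> has_type 0 m (K S).
Proof.
case/set0Pn => i iS.
pose s := tperm i ord_max.
pose T := (s^-1 @: S)%g.
have hT : ord_max \in T by apply/imsetP; exists i => //; rewrite tpermV tpermL.
apply/andP; split; first by rewrite add0n leqnSn.
apply/existsP; exists s; apply/existsP; exists (GT T); rewrite std_gen_GT /=.
rewrite span_std ?std_gen_GT // SG_GT // /perm_code.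
rewrite (eq_imset _ (perm_word_mono s)) mono_K'.
by [].
Qed.

Lemma has_type_K (C : {set word m.+1}) : has_type 0 m C -> exists2 S, S != set0 & C = K S.
Proof.
case/andP => _ /existsP[s /existsP[G /andP[hG /eqP hC]]].
rewrite span_std // /perm_code (eq_imset _ (perm_word_mono s)) in hC.
exists (s @: SG G).
  by apply/set0Pn; exists (s ord_max); apply/imsetP; exists ord_max => //; apply: SG_max.
apply/setP => x.
rewrite -(mono_mem s [ffun=> false]) -hC mem_imset //; exact: monomial_inj.
Qed.

Lemma triv_last (c : word m) : (triv_ext_word (n:=m.+1) c) 0 ord_max = 0.
Proof. by rewrite mxE insubF //= ltnn. Qed.

Lemma triv_K : triv_ext (n:=m.+1) (K (set0 : {set 'I_m})) = K [set ord_max].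
Proof.
apply/setP => x; rewrite [in RHS]inE big_set1; apply/imsetP/idP.
- case=> c; rewrite inE => /andP[/forallP hc _] ->.
  rewrite triv_last eqxx andbT; apply/forallP => j; rewrite mxE.
  by case: insubP => [j' _ _|_]; rewrite ?addr0.
- case/andP => /forallP hx /eqP hl.
  exists (\row_j x 0 (wd j)).
    rewrite inE big_set0 eqxx andbT; apply/forallP => j; rewrite mxE; exact: hx.
  apply/rowP => j; rewrite mxE; case: insubP => [j' _ vj|hj].
    by rewrite mxE; congr (x 0 _); apply/val_inj; rewrite /= vj.
  case: (ordS_case j) => [[j' ej]|->] //.
  by rewrite ej /= ltn_ord in hj.
Qed.

Lemma triv_one (S : {set 'I_m.+1}) : #|S| = 1%N ->
  [exists D : {set word m.+1.-1}, is_code D && code_equiv (K S) (triv_ext D)].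
Proof.
move=> h; apply/existsP; exists (K (set0 : {set 'I_m})).
by rewrite is_code_K /= triv_K equiv_K cards1 h.
Qed.

Lemma triv_ge2 (S : {set 'I_m.+1}) : (2 <= #|S|)%N ->
  ~~ [exists D : {set word m.+1.-1}, is_code D && code_equiv (K S) (triv_ext D)].
Proof.
move=> h2; apply/existsP => [[D /andP[_ /existsP[s /existsP[e /eqP h]]]]].
rewrite mono_K' in h.
set T := (s^-1 @: S)%g in h.
have cT : #|T| = #|S| by rewrite card_imset //; apply: perm_inj.
have : exists x, [/\ x \in K T & x 0 ord_max != 0].
  case hm : (ord_max \in T); last first.
    by exists (e2 ord_max); rewrite e2K hm mxE eqxx Z4_2.
  have : (0 < #|T :\ ord_max|)%N.
    by move: h2; rewrite -cT (cardsD1 ord_max) hm.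
  case/card_gt0P => j; rewrite !inE => /andP[jm jT].
  exists (e2 ord_max + e2 j); split.
    rewrite inE; apply/andP; split.
      by apply/forallP => i; rewrite mxE addrACA !e2_dbl addr0.
    by under eq_bigr do rewrite mxE; rewrite big_split /= !sum_e2 hm jT Z4_22.
  by rewrite !mxE eqxx (negbTE (_ : ord_max != j)) ?addr0 ?Z4_2 // eq_sym.
case=> x [xK xl].
move: xK; rewrite -h => /imsetP[c _ ec].
by rewrite ec triv_last eqxx in xl.
Qed.

Lemma good_K (C : {set word m.+1}) : good_code 0 m C -> exists2 S, C = K S & (2 <= #|S|)%N.
Proof.
case/and3P => _ ht hn; have [S S0 eC] := has_type_K ht.
exists S => //; case: (ltnP 1 #|S|) => // h1.
have : (0 < #|S|)%N by rewrite card_gt0.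
move=> h0; have e1 : #|S| = 1%N by apply/eqP; rewrite eqn_leq h1 h0.
by move: hn; rewrite eC triv_one.
Qed.

Lemma K_good (S : {set 'I_m.+1}) : (2 <= #|S|)%N -> good_code 0 m (K S).
Proof.
move=> h2; apply/and3P; split; [exact: is_code_K | | exact: triv_ge2].
apply: K_has_type; rewrite -card_gt0; exact: leq_trans h2.
Qed.

Definition wt (C : {set word m.+1}) : 'I_m.+2 := inord #|[set j | e2 j \notin C]|.

Lemma wtK (S : {set 'I_m.+1}) : wt (K S) = inord #|S|.
Proof. by rewrite /wt setK. Qed.

Lemma cardS_lt (S : {set 'I_m.+1}) : (#|S| < m.+2)%N.
Proof. by rewrite ltnS; apply: leq_trans (max_card _) _; rewrite card_ord. Qed.

End Spec.

Theorem mainTheorem7 (n : nat) : (0 < n)%N -> Nprime n 0 n.-1 = n.-1.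
Proof.
case: n => // m _ /=; rewrite /Nprime.
set Good := [set C : {set word m.+1} | good_code 0 m C].
pose F (k : 'I_m.+2) := [set D : {set word m.+1} | good_code 0 m D && (wt D == k)].
have e1 : [set [set D | good_code 0 m D && code_equiv C D] | C in Good] =
          [set F (wt C) | C in Good].
  apply: eq_in_imset => C; rewrite inE => /good_K [S -> hS].
  apply/setP => D; rewrite !inE; case gD: (good_code 0 m D) => //=.
  have [T -> hT] := good_K gD.
  by rewrite equiv_K !wtK -val_eqE /= !inordK ?cardS_lt // eq_sym.
rewrite e1 imset_comp card_in_imset; last first.
  move=> k1 k2 /imsetP[C1 gC1 ->] _ hF.
  have : C1 \in F (wt C1) by rewrite inE eqxx andbT; rewrite inE in gC1.
  by rewrite hF inE => /andP[_ /eqP].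
have e2 : [set wt C | C in Good] = [set k : 'I_m.+2 | (2 <= k)%N].
  apply/setP => k; rewrite inE; apply/imsetP/idP.
  - case=> C; rewrite inE => /good_K[S -> hS] ->.
    by rewrite wtK inordK ?cardS_lt.
  - move=> hk; have hk' : (k <= m.+1)%N by rewrite -ltnS ltn_ord.
    pose S := [set widen_ord hk' i | i in 'I_k].
    have cS : #|S| = k.
      rewrite card_imset ?card_ord // => a b h; apply/val_inj; exact: (congr1 val h).
    exists (K S); first by rewrite inE K_good // cS.
    by rewrite wtK cS inord_val.
rewrite e2.
have e3 : [set k : 'I_m.+2 | (2 <= k)%N] = [set rshift 2 i | i in 'I_m].
  apply/setP => k; rewrite inE; apply/idP/imsetP.
  - move=> hk; have hk2 : (k - 2 < m)%N.
      by rewrite ltn_subLR // addnC addn2 ltn_ord.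
    by exists (Ordinal hk2) => //; apply/val_inj; rewrite /= subnKC.
  - by case=> i _ ->.
rewrite e3 card_imset ?card_ord // => a b /(congr1 val) /= /addnI h; exact: val_inj.
Qed.
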